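(* In the setting described in the context, let $U_0,\dots,U_d$ be one of the six decompositions below, with $U_{-1}=U_{d+1}=0$. Then for $0\le i\le d$: $[0D]$: $(B-bq^{d-2i}I)U_i\subseteq U_{i-1}$ and $(B^*-b^*q^{d-2i}I)U_i\subseteq U_{i+1}$; $[0^*D^*]$: $(B-bq^{2i-d}I)U_i\subseteq U_{i-1}$ and $(B^*-b^*q^{2i-d}I)U_i\subseteq U_{i+1}$; $[0^*D]$: $(B-bq^{2i-d}I)U_i\subseteq U_{i-1}$ and $(B^*-b^*q^{d-2i}I)U_i\subseteq U_{i+1}$; $[0^*0]$: $(B-bq^{2i-d}I)U_i=0$ and $B^*U_i\subseteq U_{i-1}+U_i+U_{i+1}$; $[D^*0]$: $(B-bq^{2i-d}I)U_i\subseteq U_{i+1}$ and $(B^*-b^*q^{d-2i}I)U_i\subseteq U_{i-1}$; $[D^*D]$: $BU_i\subseteq U_{i-1}+U_i+U_{i+1}$ and $(B^*-b^*q^{d-2i}I)U_i=0$.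
   Context: $\mathbb K$ is an algebraically closed field, $q\in\mathbb K$ nonzero and not a root of unity, $V$ a nonzero finite-dimensional $\mathbb K$-vector space. A tridiagonal pair on $V$ is an ordered pair $A,A^*$ of linear maps $V\to V$ such that: (i) each of $A,A^*$ is diagonalizable; (ii) there is an ordering $V_0,\dots,V_d$ of the eigenspaces of $A$ with $A^*V_i\subseteq V_{i-1}+V_i+V_{i+1}$ ($V_{-1}=V_{d+1}=0$); (iii) there is an ordering $V^*_0,\dots,V^*_\delta$ of the eigenspaces of $A^*$ with $AV^*_i\subseteq V^*_{i-1}+V^*_i+V^*_{i+1}$ ($V^*_{-1}=V^*_{\delta+1}=0$); (iv) no subspace $W\ne0,V$ satisfies $AW\subseteq W$, $A^*W\subseteq W$. It is known $d=\delta$; orderings as in (ii),(iii) are called standard. Setting: $A,A^*$ is a tridiagonal pair on $V$; $V_0,\dots,V_d$ (resp. $V^*_0,\dots,V^*_d$) is a standard ordering of the eigenspaces of $A$ (resp. $A^*$); the eigenvalue of $A$ on $V_i$ is $aq^{2i-d}$ and that of $A^*$ on $V^*_i$ is $a^*q^{d-2i}$ for some nonzero $a,a^*\in\mathbb K$; $b,b^*\in\mathbb K$ are nonzero. The six decompositions of $V$ (sequences of nonzero subspaces whose sum is direct and equals $V$) are, for $0\le i\le d$: $[0D]$: $U_i=V_i$; $[0^*D^*]$: $U_i=V^*_i$; $[0^*D]$: $U_i=(V^*_0+\cdots+V^*_i)\cap(V_i+\cdots+V_d)$; $[0^*0]$: $U_i=(V^*_0+\cdots+V^*_i)\cap(V_0+\cdots+V_{d-i})$;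 $[D^*0]$: $U_i=(V^*_{d-i}+\cdots+V^*_d)\cap(V_0+\cdots+V_{d-i})$; $[D^*D]$: $U_i=(V^*_{d-i}+\cdots+V^*_d)\cap(V_i+\cdots+V_d)$. $B:V\to V$ is the linear map acting as $bq^{2i-d}I$ on the $i$th subspace of $[0^*0]$ for each $i$, and $B^*:V\to V$ is the linear map acting as $b^*q^{d-2i}I$ on the $i$th subspace of $[D^*D]$ for each $i$. *)

(* Defs.v *)
From HB Require Import structures.
From mathcomp Require Import all_boot all_order all_algebra.
Set Implicit Arguments. Unset Strict Implicit. Unset Printing Implicit Defensive.
Import Order.TTheory GRing.Theory Num.Theory.
Local Open Scope ring_scope.
Local Open Scope vspace_scope.

Section TDDefs.
Variables (K : fieldType) (V : vectType K).

Definition eigsp (A : 'End(V)) (th : K) : {vspace V} := lker (A - th *: \1)%VF.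

Definition diagonalizable (A : 'End(V)) : Prop :=
  exists s : seq K, (\sum_(t <- s) eigsp A t)%VS = fullv.

Definition eig_ordering (A : 'End(V)) (d : nat) (Vs : nat -> {vspace V}) : Prop :=
  [/\ (forall i, (i <= d)%N -> exists th, Vs i = eigsp A th /\ Vs i != 0%VS),
      (forall i j, (i <= d)%N -> (j <= d)%N -> Vs i = Vs j -> i = j)
    & (forall th, eigsp A th != 0%VS ->
          exists2 i, (i <= d)%N & Vs i = eigsp A th)].

Definition Uat (U : nat -> {vspace V}) (d i : nat) : {vspace V} :=
  if (i <= d)%N then U i else 0%VS.
Definition Uprev (U : nat -> {vspace V}) (d i : nat) : {vspace V} :=
  if i is k.+1 then Uat U d k else 0%VS.
Definition Unext (U : nat -> {vspace V}) (d i : nat) : {vspace V} :=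
  Uat U d i.+1.

Definition tridiag (X : 'End(V)) (d : nat) (U : nat -> {vspace V}) : Prop :=
  forall i, (i <= d)%N -> (X @: U i <= Uprev U d i + U i + Unext U d i)%VS.

Definition standard_orderings (A As : 'End(V)) (d : nat)
    (Vs Vss : nat -> {vspace V}) : Prop :=
  [/\ eig_ordering A d Vs, eig_ordering As d Vss,
      tridiag As d Vs & tridiag A d Vss].

Definition TD_pair (A As : 'End(V)) : Prop :=
  [/\ diagonalizable A, diagonalizable As,
      exists d Vs, eig_ordering A d Vs /\ tridiag As d Vs,
      exists delta Vss, eig_ordering As delta Vss /\ tridiag A delta Vss
    & forall W : {vspace V}, (A @: W <= W)%VS -> (As @: W <= W)%VS ->
        W = 0%VS \/ W = fullv].

Definition dec_0D (Vs Vss : nat -> {vspace V}) (d i : nat) := Vs i.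
Definition dec_0sDs (Vs Vss : nat -> {vspace V}) (d i : nat) := Vss i.
Definition dec_0sD (Vs Vss : nat -> {vspace V}) (d i : nat) :=
  ((\sum_(j < i.+1) Vss j) :&: (\sum_(i <= j < d.+1) Vs j))%VS.
Definition dec_0s0 (Vs Vss : nat -> {vspace V}) (d i : nat) :=
  ((\sum_(j < i.+1) Vss j) :&: (\sum_(j < (d - i).+1) Vs j))%VS.
Definition dec_Ds0 (Vs Vss : nat -> {vspace V}) (d i : nat) :=
  ((\sum_(d - i <= j < d.+1) Vss j) :&: (\sum_(j < (d - i).+1) Vs j))%VS.
Definition dec_DsD (Vs Vss : nat -> {vspace V}) (d i : nat) :=
  ((\sum_(d - i <= j < d.+1) Vss j) :&: (\sum_(i <= j < d.+1) Vs j))%VS.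

End TDDefs.

Definition qpow (K : fieldType) (q : K) (d i : nat) : K :=
  q ^ ((2 * i)%:Z - d%:Z).

Definition qpowr (K : fieldType) (q : K) (d i : nat) : K :=
  q ^ (d%:Z - (2 * i)%:Z).

(* Main.v *)
Require Import Defs.
From HB Require Import structures.
From mathcomp Require Import all_boot all_order all_algebra.
From mathcomp Require Import zify ring.
Import Order.TTheory GRing.Theory Num.Theory.
Local Open Scope ring_scope.
Set Implicit Arguments. Unset Strict Implicit. Unset Printing Implicit Defensive.

Section Gen.
Variables (K : fieldType) (V : vectType K).
Implicit Types (X Y : 'End(V)) (U S T : {vspace V}) (W : nat -> {vspace V}).

Lemma imgP X U S : reflect (forall u, u \in U -> X u \in S) (X @: U <= S)%VS.
Proof.
apply: (iffP idP) => [H u Uu | H].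
  by move/subvP: H; apply; apply: memv_img.
by apply/subvP => _ /memv_imgP[u Uu ->]; apply: H.
Qed.

Lemma shiftE X c v : (X - c *: \1)%VF v = X v - c *: v.
Proof. by rewrite add_lfunE opp_lfunE scale_lfunE id_lfunE. Qed.

Lemma limg_shift X c U S :
  (X @: U <= S)%VS -> (U <= S)%VS -> ((X - c *: \1)%VF @: U <= S)%VS.
Proof.
move=> /imgP H /subvP H2; apply/imgP => u Uu; rewrite shiftE.
by apply: memvB; [apply: H | apply: memvZ; apply: H2].
Qed.

Lemma shift_img X c U S :
  ((X - c *: \1)%VF @: U <= S)%VS -> (X @: U <= U + S)%VS.
Proof.
move=> /imgP H; apply/imgP => u Uu.
have -> : X u = c *: u + (X - c *: \1)%VF u by rewrite shiftE addrC subrK.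
by apply: memv_add; [apply: memvZ | apply: H].
Qed.

Definition Iv W d m n := (\sum_(m <= j < n) Uat W d j)%VS.

Lemma sumnat_sub (F : nat -> {vspace V}) m n S :
  (forall j, (m <= j < n)%N -> (F j <= S)%VS) -> (\sum_(m <= j < n) F j <= S)%VS.
Proof.
move=> H; rewrite big_geq_mkord; apply/subv_sumP => i /andP[_ hi].
by apply: H; rewrite hi ltn_ord.
Qed.

Lemma sumnat_sup (F : nat -> {vspace V}) m n j :
  (m <= j < n)%N -> (F j <= \sum_(m <= j < n) F j)%VS.
Proof.
move=> /andP[h1 h2]; rewrite big_geq_mkord.
by apply: (sumv_sup (Ordinal h2)) => //=; rewrite h1.
Qed.

Lemma Iv_sub W d m n j : ((j <= d)%N -> (m <= j < n)%N) -> (Uat W d j <= Iv W d m n)%VS.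
Proof.
case hj: (j <= d)%N => H; last by rewrite /Uat hj sub0v.
exact: (sumnat_sup (Uat W d) (H isT)).
Qed.

Lemma Iv_subP W d m n S :
  (forall j, (m <= j < n)%N -> (j <= d)%N -> (W j <= S)%VS) -> (Iv W d m n <= S)%VS.
Proof.
move=> H; apply: sumnat_sub => j hj; rewrite /Uat; case: ifP => hd; last by rewrite sub0v.
exact: H.
Qed.

Lemma Iv_img X c W d m n S :
  (forall j, (m <= j < n)%N -> (j <= d)%N -> ((X - c *: \1)%VF @: W j <= S)%VS) ->
  ((X - c *: \1)%VF @: Iv W d m n <= S)%VS.
Proof.
move=> H; rewrite /Iv limg_sum; apply: sumnat_sub => j hj; rewrite /Uat.
by case: ifP => hd; [apply: H | rewrite limg0 sub0v].
Qed.

Lemma Iv_img0 X W d m n S :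
  (forall j, (m <= j < n)%N -> (j <= d)%N -> (X @: W j <= S)%VS) ->
  (X @: Iv W d m n <= S)%VS.
Proof.
move=> H; rewrite /Iv limg_sum; apply: sumnat_sub => j hj; rewrite /Uat.
by case: ifP => hd; [apply: H | rewrite limg0 sub0v].
Qed.

Lemma Iv_empty W d m n : (n <= m)%N -> Iv W d m n = 0%VS.
Proof. by move=> h; rewrite /Iv big_geq. Qed.

Lemma Uat_id W d j : (j <= d)%N -> Uat W d j = W j.
Proof. by rewrite /Uat => ->. Qed.

Lemma Uprev_sub W d j m n : (0 < j -> j.-1 <= d -> m <= j.-1 < n)%N ->
  (Uprev W d j <= Iv W d m n)%VS.
Proof. by case: j => [|j] /= H; [rewrite sub0v | apply: Iv_sub => hd; apply: H]. Qed.

Lemma Unext_sub W d j m n : (j.+1 <= d -> m <= j.+1 < n)%N ->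
  (Unext W d j <= Iv W d m n)%VS.
Proof. by move=> H; apply: Iv_sub. Qed.

Lemma Wsub W d j m n : (j <= d)%N -> (m <= j < n)%N -> (W j <= Iv W d m n)%VS.
Proof. by move=> hd h; rewrite -(Uat_id W hd); apply: Iv_sub. Qed.

Section Props.
Variables (W : nat -> {vspace V}) (d : nat) (X : 'End(V)) (c : nat -> K).

Definition lowP := forall j, (j <= d)%N -> ((X - c j *: \1)%VF @: W j <= Uprev W d j)%VS.
Definition raiP := forall j, (j <= d)%N -> ((X - c j *: \1)%VF @: W j <= Unext W d j)%VS.
Definition scaP := forall j, (j <= d)%N -> ((X - c j *: \1)%VF @: W j <= 0)%VS.

Lemma tri_I : tridiag X d W -> forall m n, (X @: Iv W d m n <= Iv W d m.-1 n.+1)%VS.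
Proof.
move=> H m n; apply: Iv_img0 => j hj hd.
apply: subv_trans (H j hd) _; rewrite !subv_add; apply/andP; split; first (apply/andP; split).
- by apply: Uprev_sub => *; lia.
- by apply: Wsub => //; lia.
- by apply: Unext_sub => *; lia.
Qed.

Lemma low_I1 : lowP -> forall m n, (X @: Iv W d m n <= Iv W d m.-1 n)%VS.
Proof.
move=> H m n; apply: Iv_img0 => j hj hd.
apply: subv_trans (shift_img (H j hd)) _; rewrite subv_add; apply/andP; split.
- by apply: Wsub => //; lia.
- by apply: Uprev_sub => *; lia.
Qed.

Lemma low_I2 : lowP -> forall m n, ((X - c n.-1 *: \1)%VF @: Iv W d m n <= Iv W d m.-1 n.-1)%VS.
Proof.
move=> H m n; apply: Iv_img => j hj hd.
case: (ltnP j n.-1) => hjn.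
  apply: limg_shift.
    apply: subv_trans (shift_img (H j hd)) _; rewrite subv_add; apply/andP; split.
    - by apply: Wsub => //; lia.
    - by apply: Uprev_sub => *; lia.
  by apply: Wsub => //; lia.
have ej : j = n.-1 by lia.
by subst j; apply: subv_trans (H _ hd) _; apply: Uprev_sub => *; lia.
Qed.

Lemma rai_I1 : raiP -> forall m n, (X @: Iv W d m n <= Iv W d m n.+1)%VS.
Proof.
move=> H m n; apply: Iv_img0 => j hj hd.
apply: subv_trans (shift_img (H j hd)) _; rewrite subv_add; apply/andP; split.
- by apply: Wsub => //; lia.
- by apply: Unext_sub => *; lia.
Qed.

Lemma rai_I2 : raiP -> forall m n, ((X - c m *: \1)%VF @: Iv W d m n <= Iv W d m.+1 n.+1)%VS.
Proof.
move=> H m n; apply: Iv_img => j hj hd.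
case: (ltnP m j) => hmj.
  apply: limg_shift.
    apply: subv_trans (shift_img (H j hd)) _; rewrite subv_add; apply/andP; split.
    - by apply: Wsub => //; lia.
    - by apply: Unext_sub => *; lia.
  by apply: Wsub => //; lia.
have ej : j = m by lia.
by subst j; apply: subv_trans (H _ hd) _; apply: Unext_sub => *; lia.
Qed.

Lemma scal_I1 : scaP -> forall m n, ((X - c n.-1 *: \1)%VF @: Iv W d m n <= Iv W d m n.-1)%VS.
Proof.
move=> H m n; apply: Iv_img => j hj hd.
case: (ltnP j n.-1) => hjn.
  apply: limg_shift; last by apply: Wsub => //; lia.
  by apply: subv_trans (shift_img (H j hd)) _; rewrite addv0; apply: Wsub => //; lia.
have ej : j = n.-1 by lia.
by subst j; apply: subv_trans (H _ hd) _; rewrite sub0v.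
Qed.

Lemma scal_I2 : scaP -> forall m n, ((X - c m *: \1)%VF @: Iv W d m n <= Iv W d m.+1 n)%VS.
Proof.
move=> H m n; apply: Iv_img => j hj hd.
case: (ltnP m j) => hmj.
  apply: limg_shift; last by apply: Wsub => //; lia.
  by apply: subv_trans (shift_img (H j hd)) _; rewrite addv0; apply: Wsub => //; lia.
have ej : j = m by lia.
by subst j; apply: subv_trans (H _ hd) _; rewrite sub0v.
Qed.

End Props.

Lemma vec_comb (u w : V) (a1 a2 : K) : a1 = 0 -> a2 = 0 -> a1 *: u + a2 *: w = 0.
Proof. by move=> -> ->; rewrite !scale0r addr0. Qed.

Lemma rel_gen (U U' : nat -> {vspace V}) d X Y (al be be' : nat -> K) r ka :
 (\sum_(k < d.+1) U k)%VS = fullv ->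
 (forall j, (j <= d)%N -> ((X - al j *: \1)%VF @: U j <= U' j)%VS) ->
 (forall j v, (j <= d)%N -> v \in U j -> Y v = be j *: v) ->
 (forall j v, (j <= d)%N -> v \in U' j -> Y v = be' j *: v) ->
 (forall j, (j <= d)%N -> al j * be j = ka) ->
 (forall j, (j <= d)%N -> r * be j = r^-1 * be' j) ->
 forall v, r *: X (Y v) - r^-1 *: Y (X v) = ((r - r^-1) * ka) *: v.
Proof.
move=> hs hX hY hY' hk hr v.
pose F := (r *: (X \o Y) - r^-1 *: (Y \o X) - ((r - r^-1) * ka) *: \1)%VF.
suff : v \in lker F.
  by rewrite memv_ker /F !add_lfunE !opp_lfunE !scale_lfunE !comp_lfunE id_lfunE subr_eq0 => /eqP.
have : (fullv <= lker F)%VS.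
  rewrite -hs; apply/subv_sumP => j _; apply/subvP => u Uu.
  have hj : (j <= d)%N by rewrite -ltnS ltn_ord.
  have hw : X u - al j *: u \in U' j by rewrite -shiftE; apply: (imgP _ _ _ (hX j hj)).
  set w := X u - al j *: u in hw.
  have Xu : X u = al j *: u + w by rewrite /w addrC subrK.
  clearbody w.
  rewrite memv_ker /F !add_lfunE !opp_lfunE !scale_lfunE !comp_lfunE id_lfunE.
  rewrite (hY j u hj Uu) linearZ /= Xu linearD linearZ /=.
  rewrite [Y (_ + _)]linearD /=. have YZ : Y (al j *: u) = al j *: Y u by apply: linearZ.
  rewrite YZ (hY j u hj Uu) (hY' j w hj hw) !scalerDr !scalerA.
  rewrite (hr j hj) -(hk j hj).
  have -> : (r * (al j * be j)) *: u + (r^-1 * be' j) *: w -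
    ((r^-1 * (al j * be j)) *: u + (r^-1 * be' j) *: w) - ((r - r^-1) * (al j * be j)) *: u
    = (r * (al j * be j) - r^-1 * (al j * be j) - (r - r^-1) * (al j * be j)) *: u.
    by rewrite !scalerBl opprD addrACA subrr addr0.
  have -> : r * (al j * be j) - r^-1 * (al j * be j) - (r - r^-1) * (al j * be j) = 0 by ring.
  by rewrite scale0r.
by move/subvP; apply; apply: memvf.
Qed.

Lemma comb_aux (y v : V) a k m p : a *: y + k *: v - m *: v - (a *: y - p *: v) = (k - m + p) *: v.
Proof. rewrite opprB addrC !addrA subrK scalerDl scalerBl [p *: v + _]addrC addrAC. done. Qed.

Lemma eig_shift X Y r ka th v :
  r != 0 -> th != 0 ->
  (forall v, r *: X (Y v) - r^-1 *: Y (X v) = ((r - r^-1) * ka) *: v) ->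
  v \in eigsp X th -> (Y - (ka / th) *: \1)%VF v \in eigsp X (r^-2 * th).
Proof.
move=> r0 th0 H; rewrite /eigsp !memv_ker !shiftE => /eqP ev.
have Xv : X v = th *: v by apply/eqP; rewrite -subr_eq0 ev.
have := H v; rewrite Xv.
have YZ : Y (th *: v) = th *: Y v by apply: linearZ.
rewrite YZ scalerA => Hv.
set y := Y v in Hv *.
have eXy : r *: X y = (r^-1 * th) *: y + ((r - r^-1) * ka) *: v by rewrite -Hv addrC subrK.
have XB : X (y - (ka / th) *: v) = X y - (ka / th * th) *: v.
  by rewrite linearB /= linearZ /= Xv scalerA.
rewrite XB; apply/eqP; apply: (scalerI r0); rewrite scaler0 !scalerBr !scalerA eXy.
have -> : r * (r ^- 2 * th) = r^-1 * th.
  by rewrite expr2 invfM !mulrA divrr ?mul1r // unitfE.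
rewrite comb_aux.
apply/eqP; rewrite scaler_eq0; apply/orP; left; apply/eqP.
rewrite divfK // -mulrA [th * _]mulrC divfK //; ring.
Qed.

Lemma sum_inv (Z : nat -> {vspace V}) d X :
  tridiag X d Z -> (X @: (\sum_(k < d.+1) Z k) <= \sum_(k < d.+1) Z k)%VS.
Proof.
move=> H; rewrite limg_sum; apply/subv_sumP => k _.
have hk : (k <= d)%N by rewrite -ltnS ltn_ord.
apply: subv_trans (H k hk) _; rewrite !subv_add; apply/andP; split; first (apply/andP; split).
- rewrite /Uprev; case ek: (nat_of_ord k) => [|k']; first by rewrite sub0v.
  rewrite /Uat; case: ifP => h; last by rewrite sub0v.
  by apply: (sumv_sup (inord k')) => //; rewrite inordK // ltnS.
- by apply: (sumv_sup k).
- rewrite /Unext /Uat; case: ifP => h; last by rewrite sub0v.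
  by apply: (sumv_sup (inord k.+1)) => //; rewrite inordK // ltnS.
Qed.

Lemma sum_sub_ord (Z : nat -> {vspace V}) d S :
  (forall k, (k <= d)%N -> (Z k <= S)%VS) -> (\sum_(k < d.+1) Z k <= S)%VS.
Proof. by move=> H; apply/subv_sumP => k _; apply: H; rewrite -ltnS ltn_ord. Qed.

Lemma sum_sup_ord (Z : nat -> {vspace V}) d k :
  (k <= d)%N -> (Z k <= \sum_(k < d.+1) Z k)%VS.
Proof. by move=> hk; apply: (sumv_sup (inord k)) => //; rewrite inordK // ltnS. Qed.

Lemma Uprev_le (U : nat -> {vspace V}) d i S :
  (forall k, (k <= d)%N -> i = k.+1 -> (U k <= S)%VS) -> (Uprev U d i <= S)%VS.
Proof.
case: i => [|k] H /=; first by rewrite sub0v.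
by rewrite /Uat; case: ifP => h; [apply: H | rewrite sub0v].
Qed.

Lemma Unext_le (U : nat -> {vspace V}) d i S :
  ((i.+1 <= d)%N -> (U i.+1 <= S)%VS) -> (Unext U d i <= S)%VS.
Proof. by move=> H; rewrite /Unext /Uat; case: ifP => h; [apply: H | rewrite sub0v]. Qed.

Lemma U_in_mid (U : nat -> {vspace V}) d i k : (k <= d)%N -> (i <= k.+1)%N -> (k <= i.+1)%N ->
  (U k <= Uprev U d i + U i + Unext U d i)%VS.
Proof.
move=> hk h1 h2; case: (ltngtP k i) => h.
- have ei : i = k.+1 by lia.
  by rewrite ei /= /Uat hk; apply: subv_trans (addvSl _ _); apply: addvSl.
- have ek : k = i.+1 by lia.
  by rewrite /Unext /Uat -ek hk; apply: addvSr.
- by rewrite h; apply: subv_trans (addvSl _ _); apply: addvSr.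
Qed.

Lemma mid_gen (U : nat -> {vspace V}) d i F G Lo Hi :
 (i <= d)%N -> (\sum_(k < d.+1) U k)%VS = fullv ->
 (forall j, (j <= d)%N -> (j <= i.+1)%N -> (U j <= F)%VS) ->
 (forall j, (j <= d)%N -> (i.+2 <= j)%N -> (U j <= Hi)%VS) -> (F :&: Hi = 0)%VS ->
 (forall j, (j <= d)%N -> (j.+2 <= i)%N -> (U j <= Lo)%VS) ->
 (forall j, (j <= d)%N -> (i <= j.+1)%N -> (U j <= G)%VS) -> (Lo :&: G = 0)%VS ->
 (F :&: G <= Uprev U d i + U i + Unext U d i)%VS.
Proof.
move=> hi hs hF hH hFH hL hG hLG.
set M := (Uprev U d i + U i + Unext U d i)%VS.
set SL := (\sum_(k < d.+1 | (k.+2 <= i)%N) U k)%VS.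
set SH := (\sum_(k < d.+1 | (i.+2 <= k)%N) U k)%VS.
have hMF : (M <= F)%VS.
  rewrite !subv_add hF // andbT; apply/andP; split.
    by apply: Uprev_le => k hk ek; apply: hF => //; lia.
  by apply: Unext_le => h; apply: hF.
have hMG : (M <= G)%VS.
  rewrite !subv_add hG // ?leqnSn // andbT; apply/andP; split.
    by apply: Uprev_le => k hk ek; apply: hG => //; lia.
  by apply: Unext_le => h; apply: hG => //; lia.
have hSLF : (SL <= F)%VS.
  apply/subv_sumP => k hk; apply: hF; first by rewrite -ltnS ltn_ord.
  lia.
have hSHG : (SH <= G)%VS.
  apply/subv_sumP => k hk; apply: hG; first by rewrite -ltnS ltn_ord.
  lia.
have hfull : (fullv <= SL + M + SH)%VS.
  rewrite -hs; apply/subv_sumP => k _.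
  have hk : (k <= d)%N by rewrite -ltnS ltn_ord.
  case: (ltnP (k.+1) i) => h1.
    apply: subv_trans (addvSl _ SH); apply: subv_trans (addvSl _ M).
    by apply: (sumv_sup k).
  case: (ltnP (k) i.+2) => h2.
    apply: subv_trans (addvSl _ SH); apply: subv_trans (addvSr SL _).
    apply: U_in_mid => //; lia.
  by apply: subv_trans (addvSr _ SH); apply: (sumv_sup k).
apply/subvP => x /memv_capP[xF xG].
have : x \in (SL + M + SH)%VS by apply: (subvP hfull); apply: memvf.
case/memv_addP => a aLM [h hSH ex].
rewrite ex in xF xG *.
have aF : a \in F.
  by move: aLM; apply/subvP; rewrite subv_add hSLF.
have sHH : (SH <= Hi)%VS.
  by apply/subv_sumP => k hk; apply: hH; [rewrite -ltnS ltn_ord|].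
have sLL : (SL <= Lo)%VS.
  by apply/subv_sumP => k hk; apply: hL; [rewrite -ltnS ltn_ord|].
have h0 : h = 0.
  apply/eqP; rewrite -memv0 -hFH memv_cap; apply/andP; split.
    have -> : h = (a + h) - a by rewrite addrC addKr.
    by apply: memvB.
  by move/subvP: sHH; apply.
move: xF xG; rewrite h0 addr0 => xF xG.
move: aLM => /memv_addP[l lL [m mM ea]].
have l0 : l = 0.
  apply/eqP; rewrite -memv0 -hLG memv_cap; apply/andP; split.
    by move/subvP: sLL; apply.
  have -> : l = a - m by rewrite ea addrK.
  by apply: memvB => //; move/subvP: hMG; apply.
by rewrite ea l0 add0r.
Qed.

Lemma indep W d X (th : nat -> K) : scaP W d X th ->
  (forall j n, (j <= d)%N -> (n <= d)%N -> th j = th n -> j = n) ->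
  forall n m j, (j <= d)%N -> ~~ (m <= j < n)%N -> (W j :&: Iv W d m n = 0)%VS.
Proof.
move=> hsc hinj; elim=> [|n IH] m j hj hn.
  by rewrite Iv_empty // capv0.
apply/eqP; rewrite -subv0; apply/subvP => v /memv_capP[vW vI]; rewrite memv0.
case: (leqP n d) => hnd; last first.
  have sub : (Iv W d m n.+1 <= Iv W d m n)%VS.
    by apply: Iv_subP => k hk hkd; apply: Wsub => //; lia.
  have := IH m j hj ltac:(lia); move/eqP; rewrite -subv0 => /subvP/(_ v).
  by rewrite memv_cap vW memv0; apply; move/subvP: sub; apply.
case: (eqVneq j n) => ejn.
  by move: vI; rewrite Iv_empty ?memv0 //; lia.
have Xv : X v = th j *: v.
  have := hsc j hj; move/imgP/(_ v vW); rewrite memv0 shiftE subr_eq0 => /eqP //.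
have e1 : (X - th n *: \1)%VF v \in Iv W d m n.
  by move: (scal_I1 hsc m n.+1) => /imgP/(_ v vI).
rewrite shiftE Xv -scalerBl in e1.
have : (th j - th n) *: v \in (W j :&: Iv W d m n)%VS by rewrite memv_cap e1 memvZ.
rewrite IH //; last by lia.
rewrite memv0 scaler_eq0 subr_eq0 => /orP[/eqP e|//].
by case/eqP: ejn; apply: hinj.
Qed.

Lemma eig_zero X d W (f : nat -> K) t :
  eig_ordering X d W -> (forall i, (i <= d)%N -> W i = eigsp X (f i)) ->
  (forall i, (i <= d)%N -> f i != t) -> eigsp X t = 0%VS.
Proof.
move=> [_ _ h3] hW hf; apply/eqP; apply/negPn/negP => nz.
case: (h3 t nz) => i hi eW.
have v1 : vpick (eigsp X t) \in eigsp X t by apply: memv_pick.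
have v2 : vpick (eigsp X t) \in eigsp X (f i) by rewrite -hW // eW.
have vnz : vpick (eigsp X t) != 0 by rewrite vpick0.
move: v1 v2; rewrite /eigsp !memv_ker !shiftE !subr_eq0 => /eqP -> /eqP.
move/eqP; rewrite -subr_eq0 -scalerBl scaler_eq0 (negbTE vnz) orbF subr_eq0 => /eqP e.
by move: (hf i hi); rewrite e eqxx.
Qed.

Lemma low_from X Y (W : nat -> {vspace V}) d (f cY : nat -> K) r ka :
  eig_ordering X d W -> (forall i, (i <= d)%N -> W i = eigsp X (f i)) -> r != 0 ->
  (forall i, (i <= d)%N -> f i != 0) ->
  (forall v, r *: X (Y v) - r^-1 *: Y (X v) = ((r - r^-1) * ka) *: v) ->
  (forall j, (j <= d)%N -> ka / f j = cY j) ->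
  (forall j, (0 < j <= d)%N -> r^-2 * f j = f j.-1) ->
  (forall i, (i <= d)%N -> f i != r^-2 * f 0) -> lowP W d Y cY.
Proof.
move=> eo hW r0 f0 rel hc hs hn j hj; apply/imgP => v hv.
have hv' : v \in eigsp X (f j) by rewrite -hW.
have := eig_shift r0 (f0 j hj) rel hv'.
rewrite hc //; case: j hj hv hv' => [|j] hj hv hv' /=.
  by rewrite (eig_zero eo hW hn) memv0 => /eqP ->; rewrite ?mem0v.
have hjd : (j <= d)%N by lia.
rewrite hs; last by lia.
by rewrite /Uat hjd hW.
Qed.

Lemma rai_from X Y (W : nat -> {vspace V}) d (f cY : nat -> K) r ka :
  eig_ordering X d W -> (forall i, (i <= d)%N -> W i = eigsp X (f i)) -> r != 0 ->
  (forall i, (i <= d)%N -> f i != 0) ->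
  (forall v, r *: X (Y v) - r^-1 *: Y (X v) = ((r - r^-1) * ka) *: v) ->
  (forall j, (j <= d)%N -> ka / f j = cY j) ->
  (forall j, (j < d)%N -> r^-2 * f j = f j.+1) ->
  (forall i, (i <= d)%N -> f i != r^-2 * f d) -> raiP W d Y cY.
Proof.
move=> eo hW r0 f0 rel hc hs hn j hj; apply/imgP => v hv.
have hv' : v \in eigsp X (f j) by rewrite -hW.
have := eig_shift r0 (f0 j hj) rel hv'.
rewrite hc // /Unext /Uat; case: ifP => h.
  by rewrite hs // hW.
have ej : j = d by lia.
by subst j; rewrite (eig_zero eo hW hn).
Qed.

End Gen.


Section QP.
Variables (K : fieldType) (q : K).
Hypotheses (q0 : q != 0) (qr : forall n : nat, (0 < n)%N -> q ^+ n != 1).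

Lemma qM (x y : int) : q ^ x * q ^ y = q ^ (x + y).
Proof. by rewrite expfzDr. Qed.

Lemma q1 (x : int) : q ^ x = 1 -> x = 0.
Proof.
case: x => [n|n] /=.
  case: n => // n; rewrite /exprz => h; by move: (qr (ltn0Sn n)); rewrite h eqxx.
rewrite /exprz => /(congr1 GRing.inv); rewrite invrK invr1 => h.
by move: (qr (ltn0Sn n)); rewrite h eqxx.
Qed.

Lemma qinj (x y : int) : q ^ x = q ^ y -> x = y.
Proof.
move=> h; apply/eqP; rewrite -subr_eq0; apply/eqP; apply: q1.
by rewrite expfzDr // -invr_expz h divff // expfz_neq0.
Qed.

Lemma qE (x y : int) : x = y -> q ^ x = q ^ y.
Proof. by move=> ->. Qed.

Lemma qinv (x : int) : (q ^ x)^-1 = q ^ (- x).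
Proof. by rewrite invr_expz. Qed.

Lemma qV : q^-1 = q ^ (-1 : int).
Proof. by rewrite -qinv expr1z. Qed.

Lemma q2V : q ^- 2 = q ^ (-2 : int).
Proof. by rewrite exprnN. Qed.

Lemma q1z : q = q ^ (1 : int).
Proof. by rewrite expr1z. Qed.

Lemma sc_one (c1 c2 : K) x y : x + y = 0 -> c1 * q ^ x * (c2 * q ^ y) = c1 * c2.
Proof. by move=> h; rewrite mulrACA qM h expr0z mulr1. Qed.

Lemma qq (x : int) : q * q ^ x = q ^ (1 + x).
Proof. by rewrite -qM expr1z. Qed.

Lemma qqV (x : int) : q^-1 * q ^ x = q ^ (-1 + x).
Proof. by rewrite qV qM. Qed.

Lemma sc_qV (c : K) x y : 1 + x = -1 + y -> q * (c * q ^ x) = q^-1 * (c * q ^ y).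
Proof. by move=> h; rewrite [LHS]mulrCA [RHS]mulrCA qq qqV h. Qed.

Lemma sc_Vq (c : K) x y : -1 + x = 1 + y -> q^-1 * (c * q ^ x) = q * (c * q ^ y).
Proof. by move=> h; rewrite [LHS]mulrCA [RHS]mulrCA qq qqV h. Qed.

Lemma sc_div (c1 c2 : K) x y : c1 != 0 -> y = - x -> (c1 * c2) / (c1 * q ^ x) = c2 * q ^ y.
Proof. by move=> h ->; rewrite invfM mulrACA divff // mul1r qinv. Qed.

Lemma sc_mul (c : K) k x y : k + x = y -> q ^ k * (c * q ^ x) = c * q ^ y.
Proof. by move=> h; rewrite mulrCA qM h. Qed.

Lemma sc_neq (c : K) x y : c != 0 -> x <> y -> c * q ^ x != c * q ^ y.
Proof. by move=> c0 h; apply/negP => /eqP /(mulfI c0) /qinj. Qed.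

Lemma sc_nz (c : K) x : c != 0 -> c * q ^ x != 0.
Proof. by move=> c0; rewrite mulf_neq0 // expfz_neq0. Qed.

Lemma qV2 : (q^-1) ^- 2 = q ^ (2 : int).
Proof. by rewrite exprVn invrK. Qed.

End QP.


Section Main.
Variables (K : closedFieldType) (V : vectType K)
    (q a as_ b bs : K) (A As B Bs : 'End(V)) (d : nat)
    (Vs Vss : nat -> {vspace V}).
Hypotheses (q0 : q != 0) (qr : forall n : nat, (0 < n)%N -> q ^+ n != 1)
  (a0 : a != 0) (as0 : as_ != 0) (b0 : b != 0) (bs0 : bs != 0)
  (TD : TD_pair A As) (SO : standard_orderings A As d Vs Vss)
  (hVs : forall i, (i <= d)%N -> Vs i = eigsp A (a * qpow q d i))
  (hVss : forall i, (i <= d)%N -> Vss i = eigsp As (as_ * qpowr q d i))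
  (hB : forall i v, (i <= d)%N -> v \in dec_0s0 Vs Vss d i -> B v = (b * qpow q d i) *: v)
  (hBs : forall i v, (i <= d)%N -> v \in dec_DsD Vs Vss d i -> Bs v = (bs * qpowr q d i) *: v).

Let th j := a * qpow q d j.
Let ths j := as_ * qpowr q d j.

Lemma eoA : eig_ordering A d Vs. Proof. by case: SO. Qed.
Lemma eoAs : eig_ordering As d Vss. Proof. by case: SO. Qed.
Lemma triAsVs : tridiag As d Vs. Proof. by case: SO. Qed.
Lemma triAVss : tridiag A d Vss. Proof. by case: SO. Qed.

Lemma scA : scaP Vs d A th.
Proof. by move=> j hj; rewrite hVs // subv0 -lkerE. Qed.
Lemma scAs : scaP Vss d As ths.
Proof. by move=> j hj; rewrite hVss // subv0 -lkerE. Qed.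

Lemma Vs_nz j : (j <= d)%N -> Vs j != 0%VS.
Proof. by case: eoA => h _ _ hj; case: (h j hj) => ? []. Qed.
Lemma Vss_nz j : (j <= d)%N -> Vss j != 0%VS.
Proof. by case: eoAs => h _ _ hj; case: (h j hj) => ? []. Qed.

Lemma irr (Z : nat -> {vspace V}) :
  tridiag A d Z -> tridiag As d Z ->
  (\sum_(k < d.+1) Z k)%VS = 0%VS \/ (\sum_(k < d.+1) Z k)%VS = fullv.
Proof. by move=> h1 h2; case: TD => _ _ _ _; apply; apply: sum_inv. Qed.

Lemma sum_full (X : 'End(V)) (W : nat -> {vspace V}) : Defs.diagonalizable X -> eig_ordering X d W ->
  Iv W d 0 d.+1 = fullv.
Proof.
case=> s hs [_ _ h3]; apply/eqP; rewrite eqEsubv subvf /= -hs.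
elim/big_ind: _ => [|DD1 DD2 h1 h2|t _]; first by rewrite sub0v.
  by rewrite subv_add h1.
case: (eqVneq (eigsp X t) 0%VS) => [->|nz]; first by rewrite sub0v.
by case: (h3 t nz) => i hi <-; apply: Wsub.
Qed.

Lemma VsF : Iv Vs d 0 d.+1 = fullv.
Proof. by apply: (sum_full (X := A)); [case: TD | exact: eoA]. Qed.

Lemma Iv_mono (W : nat -> {vspace V}) m n m' n' :
  (m' <= m)%N -> (minn n d.+1 <= n')%N -> (Iv W d m n <= Iv W d m' n')%VS.
Proof. by move=> h1 h2; apply: Iv_subP => j hj hd; apply: Wsub => //; lia. Qed.

Lemma sum_Iv (W : nat -> {vspace V}) m n : (n <= d.+1)%N ->
  (\sum_(m <= j < n) W j)%VS = Iv W d m n.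
Proof.
move=> hn; apply: eq_big_nat => j hj; rewrite /Uat; case: ifP => // h; lia.
Qed.

Lemma sum_Iv0 (W : nat -> {vspace V}) n : (n <= d.+1)%N ->
  (\sum_(j < n) W j)%VS = Iv W d 0 n.
Proof. by move=> hn; rewrite -sum_Iv // big_mkord. Qed.

Definition DD1 j := (Iv Vss d 0 j.+1 :&: Iv Vs d j d.+1)%VS.
Definition DD2 j := (Iv Vss d 0 j.+1 :&: Iv Vs d 0 (d - j).+1)%VS.
Definition DD3 j := (Iv Vss d (d - j) d.+1 :&: Iv Vs d 0 (d - j).+1)%VS.
Definition DD4 j := (Iv Vss d (d - j) d.+1 :&: Iv Vs d j d.+1)%VS.

Lemma DD1E j : (j <= d)%N -> dec_0sD Vs Vss d j = DD1 j.
Proof. by move=> h; rewrite /dec_0sD /DD1 sum_Iv0 ?sum_Iv //; lia. Qed.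
Lemma DD2E j : (j <= d)%N -> dec_0s0 Vs Vss d j = DD2 j.
Proof. by move=> h; rewrite /dec_0s0 /DD2 !sum_Iv0 //; lia. Qed.
Lemma DD3E j : (j <= d)%N -> dec_Ds0 Vs Vss d j = DD3 j.
Proof. by move=> h; rewrite /dec_Ds0 /DD3 sum_Iv0 ?sum_Iv //; lia. Qed.
Lemma DD4E j : (j <= d)%N -> dec_DsD Vs Vss d j = DD4 j.
Proof. by move=> h; rewrite /dec_DsD /DD4 !sum_Iv //. Qed.


Lemma Unext_ge (U : nat -> {vspace V}) j S :
  ((j.+1 <= d)%N -> (S <= U j.+1)%VS) -> (~~ (j.+1 <= d)%N -> (S <= 0)%VS) ->
  (S <= Unext U d j)%VS.
Proof. by rewrite /Unext /Uat; case: ifP => h H1 H2; [apply: H1 | apply: H2]. Qed.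

Lemma Uprev_ge (U : nat -> {vspace V}) j S : (j <= d.+1)%N ->
  (forall k, j = k.+1 -> (S <= U k)%VS) -> (j = 0%N -> (S <= 0)%VS) ->
  (S <= Uprev U d j)%VS.
Proof.
case: j => [|k] hj H1 H2 /=; first exact: H2.
by rewrite /Uat ifT; [apply: H1 | lia].
Qed.

Lemma cap_step (f : 'End(V)) F G F' G' : (f @: F <= F')%VS -> (f @: G <= G')%VS ->
  (f @: (F :&: G) <= F' :&: G')%VS.
Proof. by move=> h1 h2; apply: subv_trans (limg_cap _ _ _) _; apply: capvS. Qed.

Lemma Iv_zero (W : nat -> {vspace V}) m n : (minn n d.+1 <= m)%N -> Iv W d m n = 0%VS.
Proof.
move=> h; apply/eqP; rewrite -subv0; apply: Iv_subP => j hj hd; lia.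
Qed.

Lemma capI_le (W1 W2 : nat -> {vspace V}) m1 n1 m2 n2 m1' n1' m2' n2' :
  (m1' <= m1)%N -> (minn n1 d.+1 <= n1')%N -> (m2' <= m2)%N -> (minn n2 d.+1 <= n2')%N ->
  (Iv W1 d m1 n1 :&: Iv W2 d m2 n2 <= Iv W1 d m1' n1' :&: Iv W2 d m2' n2')%VS.
Proof. by move=> *; apply: capvS; apply: Iv_mono. Qed.

Lemma capI_0 (W1 W2 : nat -> {vspace V}) m1 n1 m2 n2 :
  (minn n1 d.+1 <= m1)%N \/ (minn n2 d.+1 <= m2)%N ->
  (Iv W1 d m1 n1 :&: Iv W2 d m2 n2 <= 0)%VS.
Proof.
by case=> h; [rewrite (Iv_zero W1 h) cap0v | rewrite (Iv_zero W2 h) capv0]; rewrite subvv.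
Qed.

Ltac ivt := solve [ apply: capI_le; lia | apply: capI_0; lia ].

Lemma A_U2 j : (j <= d)%N -> ((A - th (d - j) *: \1)%VF @: DD2 j <= Unext DD2 d j)%VS.
Proof.
move=> hj; apply: subv_trans (cap_step (F' := Iv Vss d 0 j.+2) (G' := Iv Vs d 0 (d - j)) _ _) _.
- by apply: limg_shift; [apply: (tri_I triAVss) | apply: Iv_mono; lia].
- exact: (scal_I1 scA 0 (d - j).+1).
- by apply: Unext_ge => h; rewrite ?/DD2; ivt.
Qed.

Lemma As_U2 j : (j <= d)%N -> ((As - ths j *: \1)%VF @: DD2 j <= Uprev DD2 d j)%VS.
Proof.
move=> hj; apply: subv_trans (cap_step (F' := Iv Vss d 0 j) (G' := Iv Vs d 0 (d - j).+2) _ _) _.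
- exact: (scal_I1 scAs 0 j.+1).
- by apply: limg_shift; [apply: (tri_I triAsVs) | apply: Iv_mono; lia].
- by apply: Uprev_ge => [|k ek|ej]; rewrite ?/DD2; [lia|ivt|ivt].
Qed.

Lemma A_U4 j : (j <= d)%N -> ((A - th j *: \1)%VF @: DD4 j <= Unext DD4 d j)%VS.
Proof.
move=> hj; apply: subv_trans (cap_step (F' := Iv Vss d (d - j).-1 d.+2) (G' := Iv Vs d j.+1 d.+1) _ _) _.
- by apply: limg_shift; [apply: (tri_I triAVss) | apply: Iv_mono; lia].
- exact: (scal_I2 scA j d.+1).
- by apply: Unext_ge => h; rewrite ?/DD4; ivt.
Qed.

Lemma As_U4 j : (j <= d)%N -> ((As - ths (d - j) *: \1)%VF @: DD4 j <= Uprev DD4 d j)%VS.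
Proof.
move=> hj; apply: subv_trans (cap_step (F' := Iv Vss d (d - j).+1 d.+1) (G' := Iv Vs d j.-1 d.+2) _ _) _.
- exact: (scal_I2 scAs (d - j) d.+1).
- by apply: limg_shift; [apply: (tri_I triAsVs) | apply: Iv_mono; lia].
- by apply: Uprev_ge => [|k ek|ej]; rewrite ?/DD4; [lia|ivt|ivt].
Qed.

Lemma tri_of (X : 'End(V)) (U : nat -> {vspace V}) (c : nat -> K) :
  (forall j, (j <= d)%N -> ((X - c j *: \1)%VF @: U j <= Unext U d j)%VS \/
                           ((X - c j *: \1)%VF @: U j <= Uprev U d j)%VS) ->
  tridiag X d U.
Proof.
move=> H j hj; case: (H j hj) => /shift_img h; apply: subv_trans h _;
  rewrite subv_add; apply/andP; split.
- exact: subv_trans (addvSr (Uprev U d j) (U j)) (addvSl _ _).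
- exact: addvSr.
- exact: subv_trans (addvSr (Uprev U d j) (U j)) (addvSl _ _).
- exact: subv_trans (addvSl (Uprev U d j) (U j)) (addvSl _ _).
Qed.

Lemma DD2full : (\sum_(k < d.+1) DD2 k)%VS = fullv.
Proof.
case: (irr (Z := DD2)).
- by apply: (tri_of (c := fun j => th (d - j))) => j hj; left; apply: A_U2.
- by apply: (tri_of (c := ths)) => j hj; right; apply: As_U2.
- move=> h0; have : (DD2 0 <= 0)%VS by rewrite -h0; apply: (sum_sup_ord DD2 (leq0n d)).
  rewrite /DD2 subn0 VsF capvf /Iv big_nat1 /Uat leq0n subv0 => /eqP e.
  by move: (Vss_nz (leq0n d)); rewrite e eqxx.
- done.
Qed.

Lemma DD4full : (\sum_(k < d.+1) DD4 k)%VS = fullv.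
Proof.
case: (irr (Z := DD4)).
- by apply: (tri_of (c := th)) => j hj; left; apply: A_U4.
- by apply: (tri_of (c := fun j => ths (d - j))) => j hj; right; apply: As_U4.
- move=> h0; have : (DD4 0 <= 0)%VS by rewrite -h0; apply: (sum_sup_ord DD4 (leq0n d)).
  rewrite /DD4 subn0 VsF capvf /Iv big_nat1 /Uat leqnn subv0 => /eqP e.
  by move: (Vss_nz (leqnn d)); rewrite e eqxx.
- done.
Qed.


Lemma th_inj j n : (j <= d)%N -> (n <= d)%N -> th j = th n -> j = n.
Proof.
move=> hj hn /(mulfI a0) /(qinj q0 qr) e; lia.
Qed.

Definition Za k := (Iv Vss d 0 k.+1 :&: Iv Vs d 0 (d - k))%VS.
Definition Zb k := (Iv Vss d (d - k) d.+1 :&: Iv Vs d k.+1 d.+1)%VS.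

Lemma A_Za k : (k <= d)%N -> ((A - th (d - k).-1 *: \1)%VF @: Za k <= Unext Za d k)%VS.
Proof.
move=> hk; apply: subv_trans (cap_step (F' := Iv Vss d 0 k.+2) (G' := Iv Vs d 0 (d - k).-1) _ _) _.
- by apply: limg_shift; [apply: (tri_I triAVss) | apply: Iv_mono; lia].
- exact: (scal_I1 scA 0 (d - k)).
- by apply: Unext_ge => h; rewrite ?/Za; ivt.
Qed.

Lemma As_Za k : (k <= d)%N -> ((As - ths k *: \1)%VF @: Za k <= Uprev Za d k)%VS.
Proof.
move=> hk; apply: subv_trans (cap_step (F' := Iv Vss d 0 k) (G' := Iv Vs d 0 (d - k).+1) _ _) _.
- exact: (scal_I1 scAs 0 k.+1).
- by apply: limg_shift; [apply: (tri_I triAsVs) | apply: Iv_mono; lia].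
- by apply: Uprev_ge => [|k' ek|ej]; rewrite ?/Za; [lia|ivt|ivt].
Qed.

Lemma A_Zb k : (k <= d)%N -> ((A - th k.+1 *: \1)%VF @: Zb k <= Unext Zb d k)%VS.
Proof.
move=> hk; apply: subv_trans (cap_step (F' := Iv Vss d (d - k).-1 d.+2) (G' := Iv Vs d k.+2 d.+1) _ _) _.
- by apply: limg_shift; [apply: (tri_I triAVss) | apply: Iv_mono; lia].
- exact: (scal_I2 scA k.+1 d.+1).
- by apply: Unext_ge => h; rewrite ?/Zb; ivt.
Qed.

Lemma As_Zb k : (k <= d)%N -> ((As - ths (d - k) *: \1)%VF @: Zb k <= Uprev Zb d k)%VS.
Proof.
move=> hk; apply: subv_trans (cap_step (F' := Iv Vss d (d - k).+1 d.+1) (G' := Iv Vs d k d.+2) _ _) _.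
- exact: (scal_I2 scAs (d - k) d.+1).
- by apply: limg_shift; [apply: (tri_I triAsVs) | apply: Iv_mono; lia].
- by apply: Uprev_ge => [|k' ek|ej]; rewrite ?/Zb; [lia|ivt|ivt].
Qed.

Lemma Za0 k : Za k = 0%VS.
Proof.
case: (leqP k d) => hk; last by apply/eqP; rewrite -subv0 /Za; ivt.
have hs : (\sum_(k < d.+1) Za k)%VS = 0%VS.
  case: (irr (Z := Za)) => //.
  - by apply: (tri_of (c := fun k => th (d - k).-1)) => j hj; left; apply: A_Za.
  - by apply: (tri_of (c := ths)) => j hj; right; apply: As_Za.
  move=> hf; have sub : (\sum_(k < d.+1) Za k <= Iv Vs d 0 d)%VS.
    by apply: sum_sub_ord => j hj; apply: subv_trans (capvSr _ _) _; apply: Iv_mono; lia.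
  have : (Vs d :&: Iv Vs d 0 d = 0)%VS by apply: (indep scA th_inj) => //; lia.
  rewrite hf in sub; move/capv_idPl: (subv_trans (subvf (Vs d)) sub) => -> e.
  by move: (Vs_nz (leqnn d)); rewrite e eqxx.
by apply/eqP; rewrite -subv0 -hs; apply: sum_sup_ord.
Qed.

Lemma Zb0 k : Zb k = 0%VS.
Proof.
case: (leqP k d) => hk; last by apply/eqP; rewrite -subv0 /Zb; ivt.
have hs : (\sum_(k < d.+1) Zb k)%VS = 0%VS.
  case: (irr (Z := Zb)) => //.
  - by apply: (tri_of (c := fun k => th k.+1)) => j hj; left; apply: A_Zb.
  - by apply: (tri_of (c := fun k => ths (d - k))) => j hj; right; apply: As_Zb.
  move=> hf; have sub : (\sum_(k < d.+1) Zb k <= Iv Vs d 1 d.+1)%VS.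
    by apply: sum_sub_ord => j hj; apply: subv_trans (capvSr _ _) _; apply: Iv_mono; lia.
  have : (Vs 0 :&: Iv Vs d 1 d.+1 = 0)%VS by apply: (indep scA th_inj) => //; lia.
  rewrite hf in sub; move/capv_idPl: (subv_trans (subvf (Vs 0)) sub) => -> e.
  by move: (Vs_nz (leq0n d)); rewrite e eqxx.
by apply/eqP; rewrite -subv0 -hs; apply: sum_sup_ord.
Qed.


Lemma R1 v : q *: A (B v) - q^-1 *: B (A v) = ((q - q^-1) * (a * b)) *: v.
Proof.
apply: (rel_gen (U := DD2) (U' := Unext DD2 d) (al := fun j => th (d - j))
  (be := fun j => b * qpow q d j) (be' := fun j => b * qpow q d j.+1) DD2full).
- exact: A_U2.
- by move=> j w hj hw; apply: hB => //; rewrite DD2E.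
- move=> j w hj; rewrite /Unext /Uat; case: ifP => h hw.
    by apply: hB => //; rewrite DD2E.
  by move: hw; rewrite memv0 => /eqP ->; rewrite linear0 scaler0.
- by move=> j hj; rewrite /= /th /qpow (sc_one q0) //; lia.
- by move=> j hj; rewrite /= /qpow; apply: (sc_qV q0); lia.
Qed.

Lemma R2 v : q^-1 *: As (B v) - q^-1^-1 *: B (As v) = ((q^-1 - q^-1^-1) * (as_ * b)) *: v.
Proof.
apply: (rel_gen (U := DD2) (U' := Uprev DD2 d) (al := ths)
  (be := fun j => b * qpow q d j) (be' := fun j => b * q ^ ((2 * j)%:Z - 2%:Z - d%:Z)) DD2full).
- exact: As_U2.
- by move=> j w hj hw; apply: hB => //; rewrite DD2E.
- case=> [|j] w hj /=; first by rewrite memv0 => /eqP ->; rewrite linear0 scaler0.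
  rewrite /Uat ifT; last by lia.
  have hjd : (j <= d)%N by lia.
  move=> hw; rewrite (hB hjd); last by rewrite DD2E.
  by congr (_ *: _); congr (_ * _); rewrite /qpow; apply: qE; lia.
- by move=> j hj; rewrite /= /ths /qpowr (sc_one q0) //; lia.
- by move=> j hj; rewrite /= invrK /qpow; apply: (sc_Vq q0); lia.
Qed.

Lemma R3 v : q^-1 *: A (Bs v) - q^-1^-1 *: Bs (A v) = ((q^-1 - q^-1^-1) * (a * bs)) *: v.
Proof.
apply: (rel_gen (U := DD4) (U' := Unext DD4 d) (al := th)
  (be := fun j => bs * qpowr q d j) (be' := fun j => bs * qpowr q d j.+1) DD4full).
- exact: A_U4.
- by move=> j w hj hw; apply: hBs => //; rewrite DD4E.
- move=> j w hj; rewrite /Unext /Uat; case: ifP => h hw.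
    by apply: hBs => //; rewrite DD4E.
  by move: hw; rewrite memv0 => /eqP ->; rewrite linear0 scaler0.
- by move=> j hj; rewrite /= /th /qpow /qpowr (sc_one q0) //; lia.
- by move=> j hj; rewrite /= invrK /qpowr; apply: (sc_Vq q0); lia.
Qed.

Lemma R4 v : q *: As (Bs v) - q^-1 *: Bs (As v) = ((q - q^-1) * (as_ * bs)) *: v.
Proof.
apply: (rel_gen (U := DD4) (U' := Uprev DD4 d) (al := fun j => ths (d - j))
  (be := fun j => bs * qpowr q d j) (be' := fun j => bs * q ^ (d%:Z - (2 * j)%:Z + 2%:Z)) DD4full).
- exact: As_U4.
- by move=> j w hj hw; apply: hBs => //; rewrite DD4E.
- case=> [|j] w hj /=; first by rewrite memv0 => /eqP ->; rewrite linear0 scaler0.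
  rewrite /Uat ifT; last by lia.
  have hjd : (j <= d)%N by lia.
  move=> hw; rewrite (hBs hjd); last by rewrite DD4E.
  by congr (_ *: _); congr (_ * _); rewrite /qpowr; apply: qE; lia.
- by move=> j hj; rewrite /= /ths /qpowr (sc_one q0) //; lia.
- by move=> j hj; rewrite /= /qpowr; apply: (sc_qV q0); lia.
Qed.


Lemma LVs : lowP Vs d B (fun j => b * qpowr q d j).
Proof.
apply: (low_from (r := q) (ka := a * b) (f := th) eoA hVs q0 _ R1).
- by move=> i hi; apply: sc_nz.
- by move=> j hj; rewrite /th /qpow /qpowr; apply: sc_div; [exact: a0 | lia].
- by move=> j hj; rewrite /th /qpow q2V; apply: (sc_mul q0); lia.
- move=> i hi; rewrite /th /qpow q2V (@sc_mul _ q q0 _ _ _ ((-2 : int) + ((2 * 0)%:Z - d%:Z))) //.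
  by apply: (sc_neq q0 qr a0); lia.
Qed.

Lemma RVs : raiP Vs d Bs (fun j => bs * qpowr q d j).
Proof.
apply: (rai_from (r := q^-1) (ka := a * bs) (f := th) eoA hVs _ _ R3).
- by rewrite invr_eq0.
- by move=> i hi; apply: sc_nz.
- by move=> j hj; rewrite /th /qpow /qpowr; apply: sc_div; [exact: a0 | lia].
- by move=> j hj; rewrite /th /qpow qV2; apply: (sc_mul q0); lia.
- move=> i hi; rewrite /th /qpow qV2 (@sc_mul _ q q0 _ _ _ ((2 : int) + ((2 * d)%:Z - d%:Z))) //.
  by apply: (sc_neq q0 qr a0); lia.
Qed.

Lemma LVss : lowP Vss d B (fun j => b * qpow q d j).
Proof.
apply: (low_from (r := q^-1) (ka := as_ * b) (f := ths) eoAs hVss _ _ R2).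
- by rewrite invr_eq0.
- by move=> i hi; apply: sc_nz.
- by move=> j hj; rewrite /ths /qpow /qpowr; apply: sc_div; [exact: as0 | lia].
- by move=> j hj; rewrite /ths /qpowr qV2; apply: (sc_mul q0); lia.
- move=> i hi; rewrite /ths /qpowr qV2 (@sc_mul _ q q0 _ _ _ ((2 : int) + (d%:Z - (2 * 0)%:Z))) //.
  by apply: (sc_neq q0 qr as0); lia.
Qed.

Lemma RVss : raiP Vss d Bs (fun j => bs * qpow q d j).
Proof.
apply: (rai_from (r := q) (ka := as_ * bs) (f := ths) eoAs hVss q0 _ R4).
- by move=> i hi; apply: sc_nz.
- by move=> j hj; rewrite /ths /qpow /qpowr; apply: sc_div; [exact: as0 | lia].
- by move=> j hj; rewrite /ths /qpowr q2V; apply: (sc_mul q0); lia.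
- move=> i hi; rewrite /ths /qpowr q2V (@sc_mul _ q q0 _ _ _ ((-2 : int) + (d%:Z - (2 * d)%:Z))) //.
  by apply: (sc_neq q0 qr as0); lia.
Qed.


Lemma Uat_ext (U U' : nat -> {vspace V}) k : (forall j, (j <= d)%N -> U j = U' j) ->
  Uat U d k = Uat U' d k.
Proof. by move=> h; rewrite /Uat; case: ifP => // hk; apply: h. Qed.

Lemma Uprev_ext (U U' : nat -> {vspace V}) k : (forall j, (j <= d)%N -> U j = U' j) ->
  Uprev U d k = Uprev U' d k.
Proof. by case: k => //= k h; apply: Uat_ext. Qed.

Lemma Unext_ext (U U' : nat -> {vspace V}) k : (forall j, (j <= d)%N -> U j = U' j) ->
  Unext U d k = Unext U' d k.
Proof. by move=> h; apply: Uat_ext. Qed.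

Lemma fin_0D i : (i <= d)%N ->
  ((B - (b * qpowr q d i) *: \1)%VF @: dec_0D Vs Vss d i <= Uprev (dec_0D Vs Vss d) d i)%VS /\
  ((Bs - (bs * qpowr q d i) *: \1)%VF @: dec_0D Vs Vss d i <= Unext (dec_0D Vs Vss d) d i)%VS.
Proof. by move=> hi; split; [apply: LVs | apply: RVs]. Qed.

Lemma fin_0sDs i : (i <= d)%N ->
  ((B - (b * qpow q d i) *: \1)%VF @: dec_0sDs Vs Vss d i <= Uprev (dec_0sDs Vs Vss d) d i)%VS /\
  ((Bs - (bs * qpow q d i) *: \1)%VF @: dec_0sDs Vs Vss d i <= Unext (dec_0sDs Vs Vss d) d i)%VS.
Proof. by move=> hi; split; [apply: LVss | apply: RVss]. Qed.

Lemma fin_0sD i : (i <= d)%N ->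
  ((B - (b * qpow q d i) *: \1)%VF @: dec_0sD Vs Vss d i <= Uprev (dec_0sD Vs Vss d) d i)%VS /\
  ((Bs - (bs * qpowr q d i) *: \1)%VF @: dec_0sD Vs Vss d i <= Unext (dec_0sD Vs Vss d) d i)%VS.
Proof.
move=> hi; rewrite (Uprev_ext _ DD1E) (Unext_ext _ DD1E) DD1E //; split.
- apply: subv_trans (cap_step (F' := Iv Vss d 0 i) (G' := Iv Vs d i.-1 d.+1) _ _) _.
  + exact: (low_I2 LVss 0 i.+1).
  + by apply: limg_shift; [apply: (low_I1 LVs) | apply: Iv_mono; lia].
  + by apply: Uprev_ge => [|k ek|ej]; rewrite ?/DD1; [lia|ivt|ivt].
- apply: subv_trans (cap_step (F' := Iv Vss d 0 i.+2) (G' := Iv Vs d i.+1 d.+2) _ _) _.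
  + by apply: limg_shift; [apply: (rai_I1 RVss) | apply: Iv_mono; lia].
  + exact: (rai_I2 RVs i d.+1).
  + by apply: Unext_ge => h; rewrite ?/DD1; ivt.
Qed.

Lemma fin_Ds0 i : (i <= d)%N ->
  ((B - (b * qpow q d i) *: \1)%VF @: dec_Ds0 Vs Vss d i <= Unext (dec_Ds0 Vs Vss d) d i)%VS /\
  ((Bs - (bs * qpowr q d i) *: \1)%VF @: dec_Ds0 Vs Vss d i <= Uprev (dec_Ds0 Vs Vss d) d i)%VS.
Proof.
move=> hi; rewrite (Uprev_ext _ DD3E) (Unext_ext _ DD3E) DD3E //; split.
- have -> : qpow q d i = qpowr q d (d - i) by rewrite /qpow /qpowr; apply: qE; lia.
  apply: subv_trans (cap_step (F' := Iv Vss d (d - i).-1 d.+1) (G' := Iv Vs d 0 (d - i)) _ _) _.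
  + by apply: limg_shift; [apply: (low_I1 LVss) | apply: Iv_mono; lia].
  + exact: (low_I2 LVs 0 (d - i).+1).
  + by apply: Unext_ge => h; rewrite ?/DD3; ivt.
- have -> : qpowr q d i = qpow q d (d - i) by rewrite /qpow /qpowr; apply: qE; lia.
  apply: subv_trans (cap_step (F' := Iv Vss d (d - i).+1 d.+2) (G' := Iv Vs d 0 (d - i).+2) _ _) _.
  + exact: (rai_I2 RVss (d - i) d.+1).
  + by apply: limg_shift; [apply: (rai_I1 RVs) | apply: Iv_mono; lia].
  + by apply: Uprev_ge => [|k ek|ej]; rewrite ?/DD3; [lia|ivt|ivt].
Qed.

Lemma fin_0s0 i : (i <= d)%N ->
  ((B - (b * qpow q d i) *: \1)%VF @: dec_0s0 Vs Vss d i = 0)%VS /\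
  (Bs @: dec_0s0 Vs Vss d i <= Uprev (dec_0s0 Vs Vss d) d i + dec_0s0 Vs Vss d i
      + Unext (dec_0s0 Vs Vss d) d i)%VS.
Proof.
move=> hi; split.
  apply/eqP; rewrite -subv0; apply/imgP => v hv.
  by rewrite shiftE (hB hi hv) subrr mem0v.
rewrite (Uprev_ext _ DD2E) (Unext_ext _ DD2E) DD2E //.
apply: subv_trans (cap_step (F' := Iv Vss d 0 i.+2) (G' := Iv Vs d 0 (d - i).+2) _ _) _.
- exact: (rai_I1 RVss 0 i.+1).
- exact: (rai_I1 RVs 0 (d - i).+1).
apply: (mid_gen (Lo := Iv Vss d 0 i.-1) (Hi := Iv Vs d 0 (d - i.+1)) hi DD2full).
- by move=> j hj hji; apply: subv_trans (capvSl _ _) _; apply: Iv_mono; lia.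
- by move=> j hj hji; apply: subv_trans (capvSr _ _) _; apply: Iv_mono; lia.
- exact: (Za0 i.+1).
- by move=> j hj hji; apply: subv_trans (capvSl _ _) _; apply: Iv_mono; lia.
- by move=> j hj hji; apply: subv_trans (capvSr _ _) _; apply: Iv_mono; lia.
- case: (leqP 2 i) => h2.
    have := Za0 (i - 2); rewrite /Za.
    have -> : (i - 2).+1 = i.-1 by lia.
    by have -> : (d - (i - 2) = (d - i).+2)%N by lia.
  by rewrite Iv_zero ?cap0v //; lia.
Qed.

Lemma fin_DsD i : (i <= d)%N ->
  (B @: dec_DsD Vs Vss d i <= Uprev (dec_DsD Vs Vss d) d i + dec_DsD Vs Vss d i
      + Unext (dec_DsD Vs Vss d) d i)%VS /\
  ((Bs - (bs * qpowr q d i) *: \1)%VF @: dec_DsD Vs Vss d i = 0)%VS.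
Proof.
move=> hi; split; last first.
  apply/eqP; rewrite -subv0; apply/imgP => v hv.
  by rewrite shiftE (hBs hi hv) subrr mem0v.
rewrite (Uprev_ext _ DD4E) (Unext_ext _ DD4E) DD4E //.
apply: subv_trans (cap_step (F' := Iv Vss d (d - i).-1 d.+1) (G' := Iv Vs d i.-1 d.+1) _ _) _.
- exact: (low_I1 LVss (d - i) d.+1).
- exact: (low_I1 LVs i d.+1).
apply: (mid_gen (Lo := Iv Vss d (d.+2 - i) d.+1) (Hi := Iv Vs d i.+2 d.+1) hi DD4full).
- by move=> j hj hji; apply: subv_trans (capvSl _ _) _; apply: Iv_mono; lia.
- by move=> j hj hji; apply: subv_trans (capvSr _ _) _; apply: Iv_mono; lia.
- have := Zb0 i.+1; rewrite /Zb.
  by have -> : (d - i.+1 = (d - i).-1)%N by lia.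
- by move=> j hj hji; apply: subv_trans (capvSl _ _) _; apply: Iv_mono; lia.
- by move=> j hj hji; apply: subv_trans (capvSr _ _) _; apply: Iv_mono; lia.
- case: (leqP 2 i) => h2.
    have := Zb0 (i - 2); rewrite /Zb.
    have -> : (i - 2).+1 = i.-1 by lia.
    by have -> : (d - (i - 2) = d.+2 - i)%N by lia.
  by rewrite Iv_zero ?cap0v //; lia.
Qed.

End Main.

Theorem theorem8p1 (K : closedFieldType) (V : vectType K)
    (q a as_ b bs : K) (A As B Bs : 'End(V)) (d : nat)
    (Vs Vss : nat -> {vspace V}) :
  (0 < \dim {:V})%N ->
  q != 0 -> (forall n : nat, (0 < n)%N -> q ^+ n != 1) ->
  a != 0 -> as_ != 0 -> b != 0 -> bs != 0 ->
  TD_pair A As ->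
  standard_orderings A As d Vs Vss ->
  (forall i, (i <= d)%N -> Vs i = eigsp A (a * qpow q d i)) ->
  (forall i, (i <= d)%N -> Vss i = eigsp As (as_ * qpowr q d i)) ->
  (forall i v, (i <= d)%N -> v \in dec_0s0 Vs Vss d i ->
      B v = (b * qpow q d i) *: v) ->
  (forall i v, (i <= d)%N -> v \in dec_DsD Vs Vss d i ->
      Bs v = (bs * qpowr q d i) *: v) ->
  let U := dec_0D Vs Vss d in
  let U0 := dec_0sDs Vs Vss d in
  let U1 := dec_0sD Vs Vss d in
  let U2 := dec_0s0 Vs Vss d in
  let U3 := dec_Ds0 Vs Vss d in
  let U4 := dec_DsD Vs Vss d in
  (* [0D] *)
      (forall i, (i <= d)%N ->
        ((B - (b * qpowr q d i) *: \1)%VF @: U i <= Uprev U d i)%VS /\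
        ((Bs - (bs * qpowr q d i) *: \1)%VF @: U i <= Unext U d i)%VS) /\
      (* [0*D*] *)
      (forall i, (i <= d)%N ->
        ((B - (b * qpow q d i) *: \1)%VF @: U0 i <= Uprev U0 d i)%VS /\
        ((Bs - (bs * qpow q d i) *: \1)%VF @: U0 i <= Unext U0 d i)%VS) /\
      (* [0*D] *)
      (forall i, (i <= d)%N ->
        ((B - (b * qpow q d i) *: \1)%VF @: U1 i <= Uprev U1 d i)%VS /\
        ((Bs - (bs * qpowr q d i) *: \1)%VF @: U1 i <= Unext U1 d i)%VS) /\
      (* [0*0] *)
      (forall i, (i <= d)%N ->
        ((B - (b * qpow q d i) *: \1)%VF @: U2 i = 0)%VS /\
        (Bs @: U2 i <= Uprev U2 d i + U2 i + Unext U2 d i)%VS) /\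
      (* [D*0] *)
      (forall i, (i <= d)%N ->
        ((B - (b * qpow q d i) *: \1)%VF @: U3 i <= Unext U3 d i)%VS /\
        ((Bs - (bs * qpowr q d i) *: \1)%VF @: U3 i <= Uprev U3 d i)%VS) /\
      (* [D*D] *)
      (forall i, (i <= d)%N ->
        (B @: U4 i <= Uprev U4 d i + U4 i + Unext U4 d i)%VS /\
        ((Bs - (bs * qpowr q d i) *: \1)%VF @: U4 i = 0)%VS).

Proof.
move=> hdim q0 qr a0 as0 b0 bs0 TD SO hVs hVss hB hBs U U0 U1 U2 U3 U4.
split; first by move=> i hi; exact: (fin_0D q0 qr a0 as0 b0 bs0 TD SO hVs hVss hB hBs hi).
split; first by move=> i hi; exact: (fin_0sDs q0 qr a0 as0 b0 bs0 TD SO hVs hVss hB hBs hi).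
split; first by move=> i hi; exact: (fin_0sD q0 qr a0 as0 b0 bs0 TD SO hVs hVss hB hBs hi).
split; first by move=> i hi; exact: (fin_0s0 q0 qr a0 as0 b0 bs0 TD SO hVs hVss hB hBs hi).
split; first by move=> i hi; exact: (fin_Ds0 q0 qr a0 as0 b0 bs0 TD SO hVs hVss hB hBs hi).
by move=> i hi; exact: (fin_DsD q0 qr a0 as0 b0 bs0 TD SO hVs hVss hB hBs hi).
Qed.
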